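(* Fix any enumeration $(\mathtt C_n[-])_{n\in\mathbb N}$ of all contexts of the untyped $\lambda$-calculus, and define on the set $\Lambda$ of $\lambda$-terms $$p_{\mathrm{ctx}}(M,N)=\sum\Big\{\tfrac{1}{2^n}\ \Big|\ n\in\mathbb N,\ \mathtt C_n[M]\text{ is unsolvable or }\mathtt C_n[N]\text{ is unsolvable}\Big\}.$$ Then $p_{\mathrm{ctx}}$ is a sensible extensional $\lambda$-PPM.
   Context: A context $\mathtt C[-]$ is a $\lambda$-term with one hole; $\mathtt C[M]$ is the result of filling the hole with $M$. A $\lambda$-term is solvable if it has a head normal form (standard notion). A partial pseudo-metric (PPM) on a set $X$ is a map $p:X\times X\to[0,+\infty]$ satisfying, for all $x,y,z$: $p(x,x)\leq p(x,y)$; $p(x,y)=p(y,x)$; $p(x,y)\leq p(x,z)+p(z,y)-p(z,z)$. It induces the preorder $x\leq_p y$ iff $p(x,y)\leq p(x,x)$, and the equivalence $x\simeq_p y$ iff $x\leq_p y$ and $y\leq_p x$. Open balls are $B^p_\epsilon(x)=\{y\mid p(y,x)<p(x,x)+\epsilon\}$ ($\epsilon>0$), and the topology $\mathcal O_p(X)$ consists of all unions of open balls; a map $f:X\to X$ is $p$-continuous if it is continuous for $\mathcal O_p(X)$. A $\lambda$-theory is an equivalence relation $\simeq$ on $\Lambda$ such that $M\simeq N$ implies $MP\simeq NP$, $PM\simeq PN$ and $\lambda x.M\simeq\lambda x.N$, and $(\lambda x.M)N\simeq M[N/x]$ always holds; it is extensional if moreover $M\simeq\lambda x.Mx$ (for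 $x$ not free in $M$). A $\lambda$-PPM (resp. extensional $\lambda$-PPM) is a PPM $p$ on $\Lambda$ such that $\simeq_p$ is a $\lambda$-theory (resp. an extensional $\lambda$-theory) and, for every context $\mathtt C[-]$, the map $M\mapsto\mathtt C[M]$ is $p$-continuous. A $\lambda$-PPM $p$ is sensible if every unsolvable term $M$ is generic for $p$ (i.e. $M\leq_p N$ for all $N\in\Lambda$) while no solvable term is generic for $p$. *)

(* Defs.v *)
From HB Require Import structures.
From mathcomp Require Import all_boot all_order all_algebra.
From mathcomp Require Import all_classical all_reals.
From mathcomp Require Import esum.
From Stdlib Require Import Relations.

Set Implicit Arguments.
Unset Strict Implicit.
Unset Printing Implicit Defensive.

Import Order.TTheory GRing.Theory Num.Theory.
Local Open Scope classical_set_scope.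
Local Open Scope ring_scope.

Inductive term : Type :=
| Var : nat -> term
| App : term -> term -> term
| Lam : term -> term.

Fixpoint lift (c : nat) (t : term) : term :=
  match t with
  | Var n => if (n < c)%N then Var n else Var n.+1
  | App M N => App (lift c M) (lift c N)
  | Lam M => Lam (lift c.+1 M)
  end.

(* subst t k s : t[s/k], indices above k decremented *)
Fixpoint subst (t : term) (k : nat) (s : term) : term :=
  match t with
  | Var n => if (n < k)%N then Var n else if n == k then s else Var n.-1
  | App M N => App (subst M k s) (subst N k s)
  | Lam M => Lam (subst M k.+1 (lift 0 s))
  end.

Inductive beta : term -> term -> Prop :=
| beta_redex M N : beta (App (Lam M) N) (subst M 0 N)
| beta_appl M M' N : beta M M' -> beta (App M N) (App M' N)
| beta_appr M N N' : beta N N' -> beta (App M N) (App M N')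
| beta_lam M M' : beta M M' -> beta (Lam M) (Lam M').

Definition beta_red : term -> term -> Prop := clos_refl_trans term beta.

(* head normal forms: \x1..xn. y M1 .. Mk *)
Fixpoint head_var_app (t : term) : bool :=
  match t with
  | Var _ => true
  | App M _ => head_var_app M
  | Lam _ => false
  end.

Fixpoint is_hnf (t : term) : bool :=
  match t with
  | Lam M => is_hnf M
  | _ => head_var_app t
  end.

Definition solvable (M : term) : Prop := exists H, beta_red M H /\ is_hnf H.
Definition unsolvable (M : term) : Prop := ~ solvable M.

Inductive context : Type :=
| Hole : context
| CLam : context -> context
| CAppL : context -> term -> context
| CAppR : term -> context -> context.

Fixpoint fill (C : context) (M : term) : term :=
  match C with
  | Hole => M
  | CLam C' => Lam (fill C' M)
  | CAppL C' N => App (fill C' M) N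
  | CAppR N C' => App N (fill C' M)
  end.

Definition lambda_theory (eqv : term -> term -> Prop) : Prop :=
  [/\ (forall M, eqv M M),
      (forall M N, eqv M N -> eqv N M),
      (forall M N P, eqv M N -> eqv N P -> eqv M P),
      (forall M N P, eqv M N -> eqv (App M P) (App N P) /\ eqv (App P M) (App P N)
                                /\ eqv (Lam M) (Lam N)) &
      (forall M N, eqv (App (Lam M) N) (subst M 0 N))].

(* eta: M ~ \x. M x with x not free in M (de Bruijn: lift M) *)
Definition ext_lambda_theory (eqv : term -> term -> Prop) : Prop :=
  lambda_theory eqv /\ (forall M, eqv M (Lam (App (lift 0 M) (Var 0)))).

Section PPM.
Variables (R : realType) (X : Type).
Local Open Scope ereal_scope.
Implicit Types (p : X -> X -> \bar R).

Definition is_PPM p : Prop :=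
  [/\ (forall x y, 0 <= p x y),
      (forall x y, p x x <= p x y),
      (forall x y, p x y = p y x) &
      (forall x y z, p x y <= p x z + p z y - p z z)].

Definition ppm_le p (x y : X) : Prop := p x y <= p x x.
Definition ppm_eqv p (x y : X) : Prop := ppm_le p x y /\ ppm_le p y x.

Definition ppm_ball p (x : X) (eps : R) : set X :=
  [set y | p y x < p x x + eps%:E].

Definition ppm_open p (U : set X) : Prop :=
  exists F : set (X * R), (forall c, F c -> (0 < c.2)%R) /\
    U = \bigcup_(c in F) ppm_ball p c.1 c.2.

Definition ppm_continuous p (f : X -> X) : Prop :=
  forall U, ppm_open p U -> ppm_open p (f @^-1` U).

Definition ppm_generic p (x : X) : Prop := forall y, ppm_le p x y.
End PPM.

Definition lambda_PPM (R : realType) (p : term -> term -> \bar R) : Prop :=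
  [/\ is_PPM p, lambda_theory (ppm_eqv p) &
      forall C : context, ppm_continuous p (fill C)].

Definition ext_lambda_PPM (R : realType) (p : term -> term -> \bar R) : Prop :=
  [/\ is_PPM p, ext_lambda_theory (ppm_eqv p) &
      forall C : context, ppm_continuous p (fill C)].

Definition sensible_PPM (R : realType) (p : term -> term -> \bar R) : Prop :=
  (forall M, unsolvable M -> ppm_generic p M) /\
  (forall M, solvable M -> ~ ppm_generic p M).

Definition p_ctx (R : realType) (e : nat -> context) (M N : term) : \bar R :=
  esum [set n : nat | unsolvable (fill (e n) M) \/ unsolvable (fill (e n) N)]
       (fun n => (((2 : R) ^+ n)^-1)%:E).

(* Main.v *)
Require Import Defs.
From mathcomp Require Import all_boot all_order all_algebra all_classical all_reals.
From mathcomp Require Import ereal topology normedtype sequences esum.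
From mathcomp Require Import ring lra.
From Stdlib Require Import Permutation Relations.
From Stdlib Require List.
From mathcomp Require Import zify.
Set Implicit Arguments.
Unset Strict Implicit.
Unset Printing Implicit Defensive.

Inductive ty : Type := Ty : (nat -> seq ty) -> ty.

Fixpoint ty_ind' (P : ty -> Prop) (H : forall f, (forall i, List.Forall P (f i)) -> P (Ty f)) (t : ty) : P t :=
  match t with
  | Ty f => H f (fun i => (fix F (l : seq ty) : List.Forall P l :=
       match l with [::] => List.Forall_nil P | a :: l' => List.Forall_cons a (ty_ind' H a) (F l') end) (f i))
  end.

Inductive teq : ty -> ty -> Prop :=
| teq_intro f g : (forall i, exists l, Permutation (f i) l /\ List.Forall2 teq l (g i)) -> teq (Ty f) (Ty g).

Definition permR (m m' : seq ty) : Prop := exists l, Permutation m l /\ List.Forall2 teq l m'.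

Lemma teq_inv f g : teq (Ty f) (Ty g) -> forall i, permR (f i) (g i).
Proof. by move=> H; inversion H. Qed.

Lemma forall2_cons_r (r : ty -> ty -> Prop) l1 y l2 : List.Forall2 r l1 (y :: l2) ->
  exists x l1', [/\ l1 = x :: l1', r x y & List.Forall2 r l1' l2].
Proof. by move=> H; inversion H; subst; exists x, l. Qed.

Lemma forall2_nil_r (r : ty -> ty -> Prop) l1 : List.Forall2 r l1 [::] -> l1 = [::].
Proof. by move=> H; inversion H. Qed.

Lemma forall2_cons_l (r : ty -> ty -> Prop) x l1 l2 : List.Forall2 r (x :: l1) l2 ->
  exists y l2', [/\ l2 = y :: l2', r x y & List.Forall2 r l1 l2'].
Proof. by move=> H; inversion H; subst; exists y, l'. Qed.

Lemma forall2_nil_l (r : ty -> ty -> Prop) l2 : List.Forall2 r [::] l2 -> l2 = [::].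
Proof. by move=> H; inversion H. Qed.

Lemma forall_cons_inv (P : ty -> Prop) x l : List.Forall P (x :: l) -> P x /\ List.Forall P l.
Proof. by move=> H; inversion H. Qed.

Lemma forall_perm (P : ty -> Prop) l l' : Permutation l l' -> List.Forall P l -> List.Forall P l'.
Proof.
elim=> //.
- by move=> x l1 l2 _ IH /forall_cons_inv [H1 H2]; constructor; auto.
- move=> x y l1 /forall_cons_inv [H1 /forall_cons_inv [H2 H3]].
  by constructor => //; constructor.
- by move=> l1 l2 l3 _ IH1 _ IH2 H; auto.
Qed.

Lemma perm_forall2 (r : ty -> ty -> Prop) l1 l2 l2' : List.Forall2 r l1 l2 -> Permutation l2 l2' ->
  exists l1', Permutation l1 l1' /\ List.Forall2 r l1' l2'.
Proof.
move=> H P; elim: P l1 H => {l2 l2'}.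
- by move=> l1 H; exists l1.
- move=> x l l' _ IH l1 /forall2_cons_r [x0 [l0 [-> Hx H]]].
  have [l3 [P0 F0]] := IH _ H; exists (x0 :: l3); split; [exact: perm_skip | by constructor].
- move=> x y l l1 /forall2_cons_r [x0 [l0 [-> Hx /forall2_cons_r [y0 [l3 [-> Hy H]]]]]].
  exists [:: y0, x0 & l3]; split; first exact: perm_swap.
  by constructor => //; constructor.
- move=> l l' l'' _ IH1 _ IH2 l1 H.
  have [l0 [P0 F0]] := IH1 _ H; have [l3 [P3 F3]] := IH2 _ F0.
  exists l3; split => //; exact: perm_trans P0 P3.
Qed.

Lemma teq_refl t : teq t t.
Proof.
elim/ty_ind': t => f IH; apply: teq_intro => i; exists (f i); split => //.
by elim: (IH i) => {IH} //= x l Hx _ IH; constructor.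
Qed.

Lemma teq_trans a b c : teq a b -> teq b c -> teq a c.
Proof.
elim/ty_ind': a b c => f IH b c H1 H2.
inversion H1 as [f0 g E1 E2 E3]; subst; inversion H2 as [g0 h E4 E5 E6]; subst.
apply: teq_intro => i.
have [l [P1 F1]] := E1 i; have [l' [P2 F2]] := E4 i.
have [l0 [P0 F0]] := perm_forall2 F1 P2.
exists l0; split; first exact: perm_trans P1 P0.
have IH0 := forall_perm (perm_trans P1 P0) (IH i).
move: IH0 F2; clear -F0; elim: F0 (h i) => [|x y l1 l2 Hxy _ IH2] l3.
  by move=> _ /forall2_nil_l ->.
move=> /forall_cons_inv [Hx Hl] /forall2_cons_l [z [l4 [-> Hz H4]]].
constructor; [exact: Hx Hxy Hz | exact: IH2 _ Hl H4].
Qed.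

Lemma forall2_flip (P : ty -> Prop) (r : ty -> ty -> Prop) l1 l2 :
  List.Forall P l1 -> (forall x y, P x -> r x y -> r y x) -> List.Forall2 r l1 l2 -> List.Forall2 r l2 l1.
Proof.
move=> HP Hs H; elim: H HP => // x y l l' Hxy _ IH /forall_cons_inv [Hx Hl].
constructor; [exact: Hs Hxy | exact: IH].
Qed.

Lemma teq_sym a b : teq a b -> teq b a.
Proof.
elim/ty_ind': a b => f IH b H1.
inversion H1 as [f0 g E1 E2 E3]; subst; apply: teq_intro => i.
have [l [P1 F1]] := E1 i.
have Fl := forall_perm P1 (IH i).
have F2 := forall2_flip Fl (fun x y Hx Hxy => Hx y Hxy) F1.
have [l0 [P0 F0]] := perm_forall2 F2 (Permutation_sym P1).
by exists l0.
Qed.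

Lemma forall2_refl l : List.Forall2 teq l l.
Proof. by elim: l => // x l IH; constructor => //; exact: teq_refl. Qed.

Lemma permR_refl m : permR m m.
Proof. exists m; split => //; exact: forall2_refl. Qed.

Lemma perm_permR m m' : Permutation m m' -> permR m m'.
Proof. move=> P; exists m'; split => //; exact: forall2_refl. Qed.

Lemma forall2_trans l1 l2 l3 : List.Forall2 teq l1 l2 -> List.Forall2 teq l2 l3 -> List.Forall2 teq l1 l3.
Proof.
move=> H; elim: H l3 => [|x y l l' Hxy _ IH] l3; first by move=> /forall2_nil_l ->.
move=> /forall2_cons_l [z [l4 [-> Hz H4]]]; constructor; [exact: teq_trans Hxy Hz | exact: IH].
Qed.

Lemma permR_trans m1 m2 m3 : permR m1 m2 -> permR m2 m3 -> permR m1 m3.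
Proof.
move=> [l [P1 F1]] [l' [P2 F2]].
have [l0 [P0 F0]] := perm_forall2 F1 P2.
exists l0; split; [exact: perm_trans P1 P0 | exact: forall2_trans F0 F2].
Qed.

Lemma permR_sym m1 m2 : permR m1 m2 -> permR m2 m1.
Proof.
move=> [l [P1 F1]].
have HT : List.Forall (fun _ => True) l by elim: (l) => // *; constructor.
have F2 := forall2_flip HT (fun x y _ Hxy => teq_sym Hxy) F1.
have [l0 [P0 F0]] := perm_forall2 F2 (Permutation_sym P1).
by exists l0.
Qed.


Definition arrow (m : seq ty) (t : ty) : ty :=
  let: Ty f := t in Ty (fun i => if i is j.+1 then f j else m).

Lemma arrow_inj m t m' t' : arrow m t = arrow m' t' -> m = m' /\ t = t'.
Proof.
case: t => f; case: t' => g /= [] E; split.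
  exact: (congr1 (fun h => h 0) E).
congr Ty; apply: funext => i; exact: (congr1 (fun h => h i.+1) E).
Qed.

Lemma arrow_surj t : exists m t', t = arrow m t'.
Proof.
case: t => f; exists (f 0), (Ty (fun i => f i.+1)) => /=.
by congr Ty; apply: funext; case.
Qed.

Lemma teq_arrow m m' t t' : permR m m' -> teq t t' -> teq (arrow m t) (arrow m' t').
Proof.
case: t => f; case: t' => g /= Hm H; apply: teq_intro => [[|i]] //.
exact: teq_inv H i.
Qed.

Lemma teq_arrow_inv m t T : teq (arrow m t) T ->
  exists m' t', [/\ T = arrow m' t', permR m m' & teq t t'].
Proof.
have [m' [t' ->]] := arrow_surj T; move=> H; exists m', t'; split => //.
  by move: H; case: t => f; case: t' => g /= H; exact: (teq_inv H 0).
move: H; case: t => f; case: t' => g /= H; apply: teq_intro => i; exact: (teq_inv H i.+1).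
Qed.

Definition env := nat -> seq ty.
Definition eeq (G D : env) : Prop := forall i, Permutation (G i) (D i).
Definition e0 : env := fun _ => [::].
Definition eadd (G D : env) : env := fun i => G i ++ D i.
Definition esing (x : nat) (t : ty) : env := fun i => if i == x then [:: t] else [::].
Definition etail (G : env) : env := fun i => G i.+1.
Definition econs (m : seq ty) (G : env) : env := fun i => if i is j.+1 then G j else m.
Definition eins (c : nat) (G : env) : env :=
  fun i => if (i < c)%N then G i else if i == c then [::] else G i.-1.
Definition erem (c : nat) (G : env) : env := fun i => if (i < c)%N then G i else G i.+1.

Lemma eeq_refl G : eeq G G. Proof. by move=> i. Qed.
#[local] Hint Resolve Permutation_refl eeq_refl teq_refl permR_refl : core.
Lemma eeq_sym G D : eeq G D -> eeq D G. Proof. by move=> H i; apply: Permutation_sym. Qed.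
Lemma eeq_trans G D E : eeq G D -> eeq D E -> eeq G E.
Proof. by move=> H1 H2 i; apply: perm_trans (H1 i) (H2 i). Qed.

Lemma eadd_mor G G' D D' : eeq G G' -> eeq D D' -> eeq (eadd G D) (eadd G' D').
Proof. by move=> H H' i; apply: Permutation_app. Qed.
Lemma etail_mor G G' : eeq G G' -> eeq (etail G) (etail G').
Proof. by move=> H i; apply: H. Qed.
Lemma erem_mor c G G' : eeq G G' -> eeq (erem c G) (erem c G').
Proof. by move=> H i; rewrite /erem; case: ifP. Qed.
Lemma eins_mor c G G' : eeq G G' -> eeq (eins c G) (eins c G').
Proof. by move=> H i; rewrite /eins; case: ifP => //; case: ifP. Qed.
Lemma econs_mor m G G' : eeq G G' -> eeq (econs m G) (econs m G').
Proof. by move=> H [|i] /=; [apply: Permutation_refl | apply: H]. Qed.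

Lemma eaddC G D : eeq (eadd G D) (eadd D G).
Proof. move=> i; exact: Permutation_app_comm. Qed.
Lemma eaddA G D E : eeq (eadd G (eadd D E)) (eadd (eadd G D) E).
Proof. by move=> i; rewrite /eadd catA. Qed.
Lemma eadd0 G : eeq (eadd G e0) G.
Proof. by move=> i; rewrite /eadd cats0. Qed.
Lemma eadd0l G : eeq (eadd e0 G) G.
Proof. by move=> i. Qed.
Lemma eadd_swap A B C D : eeq (eadd (eadd A B) (eadd C D)) (eadd (eadd A C) (eadd B D)).
Proof.
move=> i; rewrite /eadd -!catA; apply: Permutation_app_head; rewrite !catA.
apply: Permutation_app_tail; exact: Permutation_app_comm.
Qed.

Lemma erem_add c G D : erem c (eadd G D) = eadd (erem c G) (erem c D).
Proof. by apply: funext => i; rewrite /erem /eadd; case: ifP. Qed.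
Lemma eins_add c G D : eins c (eadd G D) = eadd (eins c G) (eins c D).
Proof. by apply: funext => i; rewrite /eins /eadd; case: ifP => //; case: ifP. Qed.
Lemma etail_add G D : etail (eadd G D) = eadd (etail G) (etail D).
Proof. by []. Qed.

Inductive typ : env -> term -> ty -> nat -> Prop :=
| tVar G x s t : eeq G (esing x s) -> teq s t -> typ G (Var x) t 1
| tLam G Gb M m t n : typ Gb M t n -> eeq G (etail Gb) -> permR m (Gb 0) ->
    typ G (Lam M) (arrow m t) n.+1
| tApp G G1 D M N m t n1 n2 : typ G1 M (arrow m t) n1 -> typs D N m n2 ->
    eeq G (eadd G1 D) -> typ G (App M N) t (n1 + n2).+1
with typs : env -> term -> seq ty -> nat -> Prop :=
| tsNil G N : eeq G e0 -> typs G N [::] 0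
| tsCons G G1 D N s m n1 n2 : typ G1 N s n1 -> typs D N m n2 -> eeq G (eadd G1 D) ->
    typs G N (s :: m) (n1 + n2).

Lemma typ_eeq G G' M t n : typ G M t n -> eeq G' G -> typ G' M t n.
Proof.
case=> {G M t n}.
- by move=> G x s t H1 H2 H3; apply: tVar (eeq_trans H3 H1) H2.
- by move=> G Gb M m t n H1 H2 H3 H4; apply: tLam H1 (eeq_trans H4 H2) H3.
- by move=> G G1 D M N m t n1 n2 H1 H2 H3 H4; apply: tApp H1 H2 (eeq_trans H4 H3).
Qed.

Lemma typs_eeq G G' M m n : typs G M m n -> eeq G' G -> typs G' M m n.
Proof.
case=> {G M m n}.
- by move=> G N H1 H2; apply: tsNil (eeq_trans H2 H1).
- by move=> G G1 D N s m n1 n2 H1 H2 H3 H4; apply: tsCons H1 H2 (eeq_trans H4 H3).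
Qed.

Lemma typ_teq G M t n : typ G M t n -> forall t', teq t t' -> typ G M t' n.
Proof.
elim=> {G M t n}.
- move=> G x s t H1 H2 t' H3; apply: tVar H1 _; exact: teq_trans H2 H3.
- move=> G Gb M m t n H1 IH H2 H3 t' H4.
  have [m' [t'' [-> Hm Ht]]] := teq_arrow_inv H4.
  apply: tLam (IH _ Ht) H2 _; exact: permR_trans (permR_sym Hm) H3.
- move=> G G1 D M N m t n1 n2 H1 IH H2 H3 t' H4.
  apply: tApp (IH _ _) H2 H3; apply: teq_arrow => //.
Qed.

Lemma typ_Var_inv G x t n : typ G (Var x) t n -> n = 1 /\ exists s, eeq G (esing x s) /\ teq s t.
Proof. by move=> H; inversion H; subst; split => //; exists s. Qed.

Lemma typ_Lam_inv G M T n : typ G (Lam M) T n ->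
  exists Gb m t n', [/\ T = arrow m t, n = n'.+1, typ Gb M t n', eeq G (etail Gb) & permR m (Gb 0)].
Proof. by move=> H; inversion H; subst; exists Gb, m, t, n0. Qed.

Lemma typ_App_inv G M N t n : typ G (App M N) t n ->
  exists G1 D m n1 n2, [/\ n = (n1 + n2).+1, typ G1 M (arrow m t) n1, typs D N m n2 & eeq G (eadd G1 D)].
Proof. by move=> H; inversion H; subst; exists G1, D, m, n1, n2. Qed.

Lemma typs_nil_inv G N n : typs G N [::] n -> n = 0 /\ eeq G e0.
Proof. by move=> H; inversion H; subst. Qed.

Lemma typs_cons_inv G N s m n : typs G N (s :: m) n ->
  exists G1 D n1 n2, [/\ n = n1 + n2, typ G1 N s n1, typs D N m n2 & eeq G (eadd G1 D)].
Proof. by move=> H; inversion H; subst; exists G1, D, n1, n2. Qed.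

Lemma typs_cat G N a b n : typs G N (a ++ b) n ->
  exists Ga Gb na nb, [/\ n = na + nb, typs Ga N a na, typs Gb N b nb & eeq G (eadd Ga Gb)].
Proof.
elim: a G n => [|s a IH] G n /=.
  move=> H; exists e0, G, 0, n; split => //; first by apply: tsNil.
move=> /typs_cons_inv [G1 [D [n1 [n2 [-> H1 H2 H3]]]]].
have [Ga [Gb [na [nb [-> Ha Hb E]]]]] := IH _ _ H2.
exists (eadd G1 Ga), Gb, (n1 + na), nb; split.
- by rewrite addnA.
- by apply: tsCons H1 Ha _.
- done.
- apply: eeq_trans H3 _; apply: eeq_trans (eadd_mor (eeq_refl _) E) _; exact: eaddA.
Qed.

Lemma typs_app G N a b Ga Gb na nb : typs Ga N a na -> typs Gb N b nb -> eeq G (eadd Ga Gb) ->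
  typs G N (a ++ b) (na + nb).
Proof.
elim: a G Ga na => [|s a IH] G Ga na /=.
  by move=> /typs_nil_inv [-> E] Hb E'; apply: typs_eeq Hb _; apply: eeq_trans E' _; move=> i; exact: (@Permutation_app_tail _ _ [::] _ (E i)).
move=> /typs_cons_inv [G1 [D [n1 [n2 [-> H1 H2 H3]]]]] Hb E.
rewrite -addnA; apply: tsCons H1 (IH (eadd D Gb) _ _ H2 Hb (eeq_refl _)) _.
apply: eeq_trans E _; apply: eeq_trans (eadd_mor H3 (eeq_refl _)) _; apply: eeq_sym; exact: eaddA.
Qed.

Lemma typs_perm G N m n : typs G N m n -> forall m', Permutation m m' -> typs G N m' n.
Proof.
move=> H m' P; elim: P G n H => {m m'}.
- by [].
- move=> x l l' P IH G n /typs_cons_inv [G1 [D [n1 [n2 [-> H1 H2 H3]]]]].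
  by apply: tsCons H1 (IH _ _ H2) H3.
- move=> x y l G n /typs_cons_inv [G1 [D [n1 [n2 [-> H1 H2 H3]]]]].
  move: H2 => /typs_cons_inv [G2 [D2 [n3 [n4 [-> H4 H5 H6]]]]].
  rewrite addnA (addnC n1) -addnA.
  apply: tsCons H4 (tsCons H1 H5 (eeq_refl _)) _.
  apply: eeq_trans H3 _; apply: eeq_trans (eadd_mor (eeq_refl _) H6) _.
  move=> i; rewrite /eadd !catA; apply: Permutation_app_tail; exact: Permutation_app_comm.
- move=> l l' l'' P1 IH1 P2 IH2 G n H; exact: IH2 (IH1 _ _ H).
Qed.

Ltac envtac := apply: funext => i; rewrite /eins /erem /esing /etail /e0 /econs;
  repeat (case: ifP => /=); move=> *; try done; try lia.

Lemma eins_sing c x s : eins c (esing x s) = esing (if (x < c)%N then x else x.+1) s.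
Proof. envtac; case: ifP; move=> *; lia. Qed.

Lemma erem_sing k x s : erem k (esing x s) =
  if (x < k)%N then esing x s else if x == k then e0 else esing x.-1 s.
Proof.
case: ltngtP => H.
- envtac.
- envtac.
- subst; envtac.
Qed.

Lemma etail_eins c G : etail (eins c.+1 G) = eins c (etail G).
Proof. apply: funext => i; rewrite /etail /eins ltnS eqSS; case: ifP => //; case: ifP => // H1 H2.
have: (0 < i)%N by lia.
by case: i {H1 H2}. Qed.

Lemma etail_erem c G : etail (erem c.+1 G) = erem c (etail G).
Proof. by apply: funext => i; rewrite /etail /erem ltnS. Qed.

Lemma erem0 D : erem 0 D = etail D.
Proof. by apply: funext. Qed.

Lemma erem_eins c G : erem c (eins c G) = G.
Proof. apply: funext => i; rewrite /erem /eins; case: ifP => H; first by rewrite H.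
have -> : (i.+1 < c)%N = false by lia.
have -> : (i.+1 == c) = false by lia.
done. Qed.

Lemma eins_self c G : eins c G c = [::].
Proof. by rewrite /eins ltnn eqxx. Qed.

Lemma etail_eins0 D : etail (eins 0 D) = D.
Proof. by apply: funext. Qed.

Lemma perm_nil_r (A : Type) (l : seq A) : Permutation l [::] -> l = [::].
Proof. by move=> /Permutation_sym /Permutation_nil. Qed.

Lemma perm_size (A : Type) (l l' : seq A) : Permutation l l' -> size l = size l'.
Proof.
have E : forall l0 : seq A, size l0 = length l0 by elim=> //= ? ? ->.
by move=> /Permutation_length; rewrite -!E.
Qed.

Lemma eeq_at G D i : eeq G D -> Permutation (G i) (D i).
Proof. by apply. Qed.

Lemma typs_map (P : env -> env) N N' :
  (forall G t n, typ G N t n -> typ (P G) N' t n) ->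
  eeq (P e0) e0 ->
  (forall G D, eeq (P (eadd G D)) (eadd (P G) (P D))) ->
  (forall G G', eeq G G' -> eeq (P G) (P G')) ->
  forall m D n, typs D N m n -> typs (P D) N' m n.
Proof.
move=> Ht H0 Hadd Hmor; elim=> [|s m IH] D n.
  by move=> /typs_nil_inv [-> E]; apply: tsNil; apply: eeq_trans (Hmor _ _ E) H0.
move=> /typs_cons_inv [G1 [D2 [n1 [n2 [-> H1 H2 H3]]]]].
apply: tsCons (Ht _ _ _ H1) (IH _ _ H2) _.
exact: eeq_trans (Hmor _ _ H3) (Hadd _ _).
Qed.

Lemma lift_typ M : forall c G t n, typ G M t n -> typ (eins c G) (Defs.lift c M) t n.
Proof.
elim: M => [x|P IHP Q IHQ|M IH] c G t n /=.
- move=> /typ_Var_inv [-> [s [E Ht]]].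
  have E' := eins_mor c E; rewrite eins_sing in E'.
  by case: ifP E' => _ E'; apply: tVar E' Ht.
- move=> /typ_App_inv [G1 [D [m [n1 [n2 [-> H1 H2 H3]]]]]].
  apply: (tApp (D := eins c D) (IHP _ _ _ _ H1)).
    apply: (typs_map (P := eins c) (IHQ c)) H2.
    + by move=> i; rewrite /eins /e0; case: ifP => //; case: ifP.
    + by move=> G' D'; rewrite eins_add.
    + exact: eins_mor.
  by rewrite -eins_add; apply: eins_mor.
- move=> /typ_Lam_inv [Gb [m [t' [n' [-> -> H1 H2 H3]]]]].
  apply: tLam (IH _ _ _ _ H1) _ _ => //.
  by rewrite etail_eins; apply: eins_mor.
Qed.

Lemma lift_typs c N m D n : typs D N m n -> typs (eins c D) (Defs.lift c N) m n.
Proof.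
apply: (typs_map (P := eins c)).
- exact: lift_typ.
- by move=> i; rewrite /eins /e0; case: ifP => //; case: ifP.
- by move=> G' D'; rewrite eins_add.
- exact: eins_mor.
Qed.

Lemma strengthen_typ M : forall c G t n, typ G (Defs.lift c M) t n -> typ (erem c G) M t n.
Proof.
elim: M => [x|P IHP Q IHQ|M IH] c G t n /=.
- case: ifP => Hx /typ_Var_inv [-> [s [E Ht]]]; apply: tVar Ht;
  apply: eeq_trans (erem_mor c E) _; rewrite erem_sing.
  + by rewrite Hx.
  + have -> : (x.+1 < c)%N = false by lia.
    have -> : (x.+1 == c) = false by lia.
    done.
- move=> /typ_App_inv [G1 [D [m [n1 [n2 [-> H1 H2 H3]]]]]].
  apply: (tApp (D := erem c D) (IHP _ _ _ _ H1)).
    apply: (typs_map (P := erem c) (IHQ c)) H2.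
    + by move=> i; rewrite /erem /e0; case: ifP.
    + by move=> G' D'; rewrite erem_add.
    + exact: erem_mor.
  by rewrite -erem_add; apply: erem_mor.
- move=> /typ_Lam_inv [Gb [m [t' [n' [-> -> H1 H2 H3]]]]].
  apply: tLam (IH _ _ _ _ H1) _ _ => //.
  by rewrite etail_erem; apply: erem_mor.
Qed.

Lemma strengthen_typs c N m D n : typs D (Defs.lift c N) m n -> typs (erem c D) N m n.
Proof.
apply: (typs_map (P := erem c)).
- exact: strengthen_typ.
- by move=> i; rewrite /erem /e0; case: ifP.
- by move=> G' D'; rewrite erem_add.
- exact: erem_mor.
Qed.

Lemma lift_typ_empty M : forall c G t n, typ G (Defs.lift c M) t n -> G c = [::].
Proof.
elim: M => [x|P IHP Q IHQ|M IH] c G t n /=.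
- case: ifP => Hx /typ_Var_inv [_ [s [E _]]]; apply: perm_nil_r;
  apply: perm_trans (E c) _; rewrite /esing; case: ifP => //; move=> *; lia.
- move=> /typ_App_inv [G1 [D [m [n1 [n2 [_ H1 H2 H3]]]]]].
  have E1 := IHP _ _ _ _ H1.
  suff E2 : D c = [::] by apply: perm_nil_r; apply: perm_trans (H3 c) _; rewrite /eadd E1 E2.
  move: H2; clear H1 H3; elim: m D n2 => [|s m IHm] D n2.
    by move=> /typs_nil_inv [_ E]; apply: perm_nil_r (E c).
  move=> /typs_cons_inv [G2 [D2 [n3 [n4 [_ H4 H5 H6]]]]].
  apply: perm_nil_r; apply: perm_trans (H6 c) _.
  by rewrite /eadd (IHQ _ _ _ _ H4) (IHm _ _ H5).
- move=> /typ_Lam_inv [Gb [m [t' [n' [_ _ H1 H2 H3]]]]].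
  apply: perm_nil_r; apply: perm_trans (H2 c) _; rewrite /etail /= (IH _ _ _ _ H1); done.
Qed.

Lemma lift_typs_empty c N m D n : typs D (Defs.lift c N) m n -> D c = [::].
Proof.
elim: m D n => [|s m IHm] D n.
  by move=> /typs_nil_inv [_ E]; apply: perm_nil_r (E c).
move=> /typs_cons_inv [G2 [D2 [n3 [n4 [_ H4 H5 H6]]]]].
apply: perm_nil_r; apply: perm_trans (H6 c) _.
by rewrite /eadd (lift_typ_empty H4) (IHm _ _ H5).
Qed.

Lemma typs_forall2 D N l m n : typs D N l n -> List.Forall2 teq l m -> typs D N m n.
Proof.
move=> H F; elim: F D n H => // x y l1 l2 Hxy _ IH D n.
move=> /typs_cons_inv [G1 [D2 [n1 [n2 [-> H1 H2 H3]]]]].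
apply: tsCons (typ_teq H1 Hxy) (IH _ _ H2) H3.
Qed.

Lemma typs_permR D N m m' n : typs D N m n -> permR m m' -> typs D N m' n.
Proof. move=> H [l [P F]]; exact: typs_forall2 (typs_perm H P) F. Qed.

Lemma split_typs D N G G1 G2 k nN : typs D N (G k) nN -> eeq G (eadd G1 G2) ->
  exists D1 D2 n1 n2, [/\ nN = n1 + n2, typs D1 N (G1 k) n1, typs D2 N (G2 k) n2 & eeq D (eadd D1 D2)].
Proof.
move=> H E; have := typs_perm H (E k); rewrite /eadd => /typs_cat.
move=> [D1 [D2 [n1 [n2 [-> H1 H2 H3]]]]]; by exists D1, D2, n1, n2.
Qed.

Lemma env_combine k G G1 G2 D D1 D2 : eeq G (eadd G1 G2) -> eeq D (eadd D1 D2) ->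
  eeq (eadd (erem k G) D) (eadd (eadd (erem k G1) D1) (eadd (erem k G2) D2)).
Proof.
move=> E1 E2; apply: eeq_trans (eadd_mor (erem_mor k E1) E2) _.
rewrite erem_add; exact: eadd_swap.
Qed.

Lemma typs_e0 N : typs e0 N [::] 0.
Proof. exact: tsNil. Qed.

Lemma typs_one G N s n : typ G N s n -> typs G N [:: s] n.
Proof. move=> H; rewrite -[n]addn0; apply: tsCons H (typs_e0 N) _; exact: eeq_sym (eadd0 G). Qed.

Lemma typs_one_inv G N s n : typs G N [:: s] n -> typ G N s n.
Proof.
move=> /typs_cons_inv [G1 [D [n1 [n2 [-> H1 /typs_nil_inv [-> E] H3]]]]].
rewrite addn0; apply: typ_eeq H1 _; apply: eeq_trans H3 _.
exact: eeq_trans (eadd_mor (eeq_refl _) E) (eadd0 _).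
Qed.

Lemma subst_typ M : forall k N G t n D nN, typ G M t n -> typs D N (G k) nN ->
  exists n', n' + size (G k) = n + nN /\ typ (eadd (erem k G) D) (subst M k N) t n'.
Proof.
elim: M => [x|P IHP Q IHQ|M IH] k N G t n D nN.
- move=> /typ_Var_inv [-> [s [E Ht]]] HN /=.
  have Gk : Permutation (G k) (esing x s k) by apply: E.
  have := erem_mor k E; rewrite erem_sing => E'.
  case: (ltngtP x k) E' => Hxk E'.
  + have Gk0 : G k = [::] by apply: perm_nil_r; apply: perm_trans Gk _; rewrite /esing; case: ifP => //; lia.
    rewrite Gk0 in HN; have [-> ED] := typs_nil_inv HN.
    exists 1; rewrite Gk0; split => //; apply: tVar Ht.
    apply: eeq_trans (eadd_mor E' ED) _; exact: eadd0.
  + have Gk0 : G k = [::] by apply: perm_nil_r; apply: perm_trans Gk _; rewrite /esing; case: ifP => //; lia.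
    rewrite Gk0 in HN; have [-> ED] := typs_nil_inv HN.
    exists 1; rewrite Gk0; split => //; apply: tVar Ht.
    apply: eeq_trans (eadd_mor E' ED) _; exact: eadd0.
  + subst x.
    have Gk1 : G k = [:: s] by apply: Permutation_length_1_inv; apply: Permutation_sym; move: Gk; rewrite /esing eqxx.
    rewrite Gk1 in HN; have HN' := typ_teq (typs_one_inv HN) Ht.
    exists nN; rewrite Gk1 /= addnC; split => //.
    apply: typ_eeq HN' _; apply: eeq_trans (eadd_mor E' (eeq_refl _)) _; exact: eadd0l.
- move=> /typ_App_inv [G1 [D' [m [n1 [n2 [-> H1 H2 H3]]]]]] HN /=.
  have [Da [Db [na [nb [-> Ha Hb ED]]]]] := split_typs HN H3.
  have [nP [EP HP]] := IHP _ _ _ _ _ _ _ H1 Ha.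
  suff [nQ [EQ HQ]] : exists nQ, nQ + size (D' k) = n2 + nb /\
      typs (eadd (erem k D') Db) (subst Q k N) m nQ.
    exists (nP + nQ).+1; split.
      have := perm_size (H3 k); rewrite /eadd size_cat => ->; lia.
    apply: tApp HP HQ _; exact: env_combine.
  move: H2 Hb; clear H1 H3 HN Ha HP EP ED.
  elim: m D' n2 Db nb => [|s m IHm] D' n2 Db nb.
    move=> /typs_nil_inv [-> E] Hb.
    have E0 : D' k = [::] by apply: perm_nil_r (E k).
    rewrite E0 in Hb; have [-> ED] := typs_nil_inv Hb.
    exists 0; rewrite E0; split => //; apply: tsNil.
    apply: eeq_trans (eadd_mor (erem_mor k E) ED) _.
    by move=> i; rewrite /eadd /erem /e0; case: ifP.
  move=> /typs_cons_inv [G2 [D2 [n3 [n4 [-> H4 H5 H6]]]]] Hb.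
  have [Dc [Dd [nc [nd [-> Hc Hd ED]]]]] := split_typs Hb H6.
  have [n5 [E5 H7]] := IHQ _ _ _ _ _ _ _ H4 Hc.
  have [n6 [E6 H8]] := IHm _ _ _ _ H5 Hd.
  exists (n5 + n6); split.
    have := perm_size (H6 k); rewrite /eadd size_cat => ->; lia.
  apply: tsCons H7 H8 _; exact: env_combine.
- move=> /typ_Lam_inv [Gb [m [t' [n' [-> -> H1 H2 H3]]]]] HN /=.
  have HN1 : typs D N (Gb k.+1) nN := typs_perm HN (H2 k).
  have [n'' [E HM]] := IH _ _ _ _ _ _ _ H1 (lift_typs 0 HN1).
  exists n''.+1; split.
    by rewrite (perm_size (H2 k)) /etail addSn E.
  apply: tLam HM _ _.
    rewrite etail_add etail_erem etail_eins0; apply: eadd_mor => //; exact: erem_mor.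
  by rewrite /eadd /erem /eins /= cats0.
Qed.

Lemma antisubst_typ M : forall k N G t n, typ G (subst M k N) t n ->
  exists G' D n1 n2, [/\ typ G' M t n1, typs D N (G' k) n2 & eeq G (eadd (erem k G') D)].
Proof.
elim: M => [x|P IHP Q IHQ|M IH] k N G t n /=.
- have gen : forall y, Defs.lift k (Var y) = Var x -> typ G (Var y) t n ->
      exists G' D n1 n2, [/\ typ G' (Var x) t n1, typs D N (G' k) n2 & eeq G (eadd (erem k G') D)].
    move=> y Ey H; have := lift_typ k H; rewrite Ey => H'.
    exists (eins k G), e0, n, 0; split => //; first by rewrite eins_self; exact: typs_e0.
    rewrite erem_eins; exact: eeq_sym (eadd0 G).
  case: ifP => Hxk.
    by apply: gen => /=; rewrite Hxk.
  case: ifP => Hxk2.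
    move/eqP: Hxk2 => -> H.
    exists (esing k t), G, 1, n; split.
    + by apply: tVar.
    + by rewrite /esing eqxx; apply: typs_one.
    + rewrite erem_sing ltnn eqxx; exact: eeq_sym (eadd0l G).
  apply: gen => /=; have -> : (x.-1 < k)%N = false by lia.
  by have -> : x.-1.+1 = x by lia.
- move=> /typ_App_inv [G1 [D' [m [n1 [n2 [_ H1 H2 H3]]]]]].
  have [GP [DP [n3 [n4 [HP HDP EP]]]]] := IHP _ _ _ _ _ H1.
  suff [GQ [DQ [n5 [n6 [HQ HDQ EQ]]]]] : exists GQ DQ n5 n6,
      [/\ typs GQ Q m n5, typs DQ N (GQ k) n6 & eeq D' (eadd (erem k GQ) DQ)].
    exists (eadd GP GQ), (eadd DP DQ), (n3 + n5).+1, (n4 + n6); split.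
    + by apply: tApp HP HQ _.
    + by apply: typs_app HDP HDQ _.
    + apply: eeq_trans H3 _; apply: eeq_trans (eadd_mor EP EQ) _.
      rewrite erem_add; exact: eadd_swap.
  move: H2; clear H1 H3 HP HDP EP.
  elim: m D' n2 => [|s m IHm] D' n2.
    move=> /typs_nil_inv [_ E].
    exists e0, e0, 0, 0; split; try exact: typs_e0.
    apply: eeq_trans E _; by move=> i; rewrite /eadd /erem /e0; case: ifP.
  move=> /typs_cons_inv [G2 [D2 [n7 [n8 [_ H4 H5 H6]]]]].
  have [G3 [D3 [n9 [n10 [H7 H8 E3]]]]] := IHQ _ _ _ _ _ H4.
  have [G4 [D4 [n11 [n12 [H9 H10 E4]]]]] := IHm _ _ H5.
  exists (eadd G3 G4), (eadd D3 D4), (n9 + n11), (n10 + n12); split.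
  + by apply: tsCons H7 H9 _.
  + by apply: typs_app H8 H10 _.
  + apply: eeq_trans H6 _; apply: eeq_trans (eadd_mor E3 E4) _.
    rewrite erem_add; exact: eadd_swap.
- move=> /typ_Lam_inv [Gb [m [t' [n' [-> _ H1 H2 H3]]]]].
  have [G'b [Db [n1 [n2 [HM HD E]]]]] := IH _ _ _ _ _ H1.
  have Db0 := lift_typs_empty HD.
  have HD' := strengthen_typs HD.
  exists (etail G'b), (erem 0 Db), n1.+1, n2; split => //.
  + apply: tLam HM (eeq_refl _) _.
    apply: permR_trans H3 _; apply: perm_permR; apply: perm_trans (E 0) _.
    by rewrite /eadd /erem /= Db0 cats0.
  + apply: eeq_trans H2 _; apply: eeq_trans (etail_mor E) _.
    by rewrite etail_add etail_erem erem0.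
Qed.

Lemma beta_root_red G M N t n : typ G (App (Lam M) N) t n ->
  exists n', (n' < n)%N /\ typ G (subst M 0 N) t n'.
Proof.
move=> /typ_App_inv [G1 [D [m [n1 [n2 [-> H1 H2 H3]]]]]].
move: H1 => /typ_Lam_inv [Gb [m' [t' [n' [Ea -> H4 H5 H6]]]]].
have [Em Et] := arrow_inj Ea; subst m' t'.
have [n'' [E HS]] := subst_typ H4 (typs_permR H2 H6).
exists n''; split; first lia.
apply: typ_eeq HS _; apply: eeq_trans H3 _; apply: eadd_mor => //.
Qed.

Lemma beta_root_exp G M N t n : typ G (subst M 0 N) t n ->
  exists n', typ G (App (Lam M) N) t n'.
Proof.
move=> /antisubst_typ [G' [D [n1 [n2 [HM HD E]]]]].
exists ((n1.+1 + n2).+1); apply: tApp (tLam HM (eeq_refl _) (permR_refl _)) HD _.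
by rewrite -erem0.
Qed.

Definition typable (M : term) : Prop := exists G t n, typ G M t n.

Lemma ctx_typ (M N : term) :
  (forall G t n, typ G M t n -> exists n', typ G N t n') ->
  forall C G t n, typ G (fill C M) t n -> exists n', typ G (fill C N) t n'.
Proof.
move=> HMN; elim=> [|C IH|C IH P|P C IH] G t n /=.
- exact: HMN.
- move=> /typ_Lam_inv [Gb [m [t' [n' [-> _ H1 H2 H3]]]]].
  have [n'' H] := IH _ _ _ H1; exists n''.+1; exact: tLam H H2 H3.
- move=> /typ_App_inv [G1 [D [m [n1 [n2 [_ H1 H2 H3]]]]]].
  have [n'' H] := IH _ _ _ H1; exists (n'' + n2).+1; exact: tApp H H2 H3.
- move=> /typ_App_inv [G1 [D [m [n1 [n2 [_ H1 H2 H3]]]]]].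
  suff [n'' H] : exists n'', typs D (fill C N) m n'' by exists (n1 + n'').+1; exact: tApp H1 H H3.
  move: H2; clear H1 H3; elim: m D n2 => [|s m IHm] D n2.
    by move=> /typs_nil_inv [_ E]; exists 0; apply: tsNil.
  move=> /typs_cons_inv [G2 [D2 [n3 [n4 [_ H4 H5 H6]]]]].
  have [n5 H7] := IH _ _ _ H4; have [n6 H8] := IHm _ _ H5.
  exists (n5 + n6); exact: tsCons H7 H8 H6.
Qed.

Lemma beta_exp A B : beta A B -> forall G t n, typ G B t n -> exists n', typ G A t n'.
Proof.
elim=> {A B}.
- move=> M N G t n H; exact: beta_root_exp H.
- move=> M M' N _ IH G t n /typ_App_inv [G1 [D [m [n1 [n2 [_ H1 H2 H3]]]]]].
  have [n'' H] := IH _ _ _ H1; exists (n'' + n2).+1; exact: tApp H H2 H3.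
- move=> M N N' _ IH G t n /typ_App_inv [G1 [D [m [n1 [n2 [_ H1 H2 H3]]]]]].
  suff [n'' H] : exists n'', typs D N m n'' by exists (n1 + n'').+1; exact: tApp H1 H H3.
  move: H2; clear H1 H3; elim: m D n2 => [|s m IHm] D n2.
    by move=> /typs_nil_inv [_ E]; exists 0; apply: tsNil.
  move=> /typs_cons_inv [G2 [D2 [n3 [n4 [_ H4 H5 H6]]]]].
  have [n5 H7] := IH _ _ _ H4; have [n6 H8] := IHm _ _ H5.
  exists (n5 + n6); exact: tsCons H7 H8 H6.
- move=> M M' _ IH G t n /typ_Lam_inv [Gb [m [t' [n' [-> _ H1 H2 H3]]]]].
  have [n'' H] := IH _ _ _ H1; exists n''.+1; exact: tLam H H2 H3.
Qed.

Lemma beta_red_exp A B : beta_red A B -> typable B -> typable A.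
Proof.
elim=> {A B}.
- move=> A B H [G [t [n HB]]]; have [n' HA] := beta_exp H HB; by exists G, t, n'.
- done.
- move=> A B C _ IH1 _ IH2 H; exact: IH1 (IH2 H).
Qed.

Lemma hnf_typ_head M : head_var_app M -> forall t, exists G n, typ G M t n.
Proof.
elim: M => [x|P IHP Q IHQ|M IH] //= H t.
- by exists (esing x t), 1; apply: tVar.
- have [G [n HP]] := IHP H (arrow [::] t).
  exists G, (n + 0).+1; apply: tApp HP (typs_e0 Q) _; exact: eeq_sym (eadd0 G).
Qed.

Lemma hnf_typable M : is_hnf M -> typable M.
Proof.
elim: M => [x|P IHP Q IHQ|M IH] /= H.
- have [G [n HM]] := hnf_typ_head (M := Var x) H (Ty (fun _ => [::])); by exists G, (Ty (fun _ => [::])), n.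
- have [G [n HM]] := hnf_typ_head (M := App P Q) H (Ty (fun _ => [::])); by exists G, (Ty (fun _ => [::])), n.
- have [G [t [n HM]]] := IH H; exists (etail G), (arrow (G 0) t), n.+1; exact: tLam HM (eeq_refl _) (permR_refl _).
Qed.

Lemma solvable_typable M : solvable M -> typable M.
Proof. by move=> [H [HR Hh]]; apply: beta_red_exp HR (hnf_typable Hh). Qed.

Lemma head_step G M t n : typ G M t n -> ~~ is_hnf M ->
  exists M' n', [/\ beta M M', typ G M' t n' & (n' < n)%N].
Proof.
elim: M G t n => [x|P IHP Q IHQ|M IH] G t n //=.
- move=> H Hh; move: H => /typ_App_inv [G1 [D [m [n1 [n2 [-> H1 H2 H3]]]]]].
  case: P IHP H1 Hh => [y|P1 P2|P0] IHP H1 Hh //=.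
  + have Hh' : ~~ is_hnf (App P1 P2) by [].
    have [M' [n' [Hb HM' Hlt]]] := IHP _ _ _ H1 Hh'.
    exists (App M' Q), (n' + n2).+1; split.
    * exact: beta_appl.
    * exact: tApp HM' H2 H3.
    * lia.
  + have [n' [Hlt HS]] := beta_root_red (tApp H1 H2 H3).
    exists (subst P0 0 Q), n'; split => //; exact: beta_redex.
- move=> /typ_Lam_inv [Gb [m [t' [n' [-> -> H1 H2 H3]]]]] Hh.
  have [M' [n'' [Hb HM' Hlt]]] := IH _ _ _ H1 Hh.
  exists (Lam M'), n''.+1; split.
  + exact: beta_lam.
  + exact: tLam HM' H2 H3.
  + by [].
Qed.

Lemma typable_solvable M : typable M -> solvable M.
Proof.
move=> [G [t [n H]]].
suff gen : forall k n M G t, (n <= k)%N -> typ G M t n -> solvable M by exact: gen H.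
clear H G t n M.
elim=> [|k IHk] n M G t Hn H.
  have E : n = 0 by lia.
  subst n; inversion H.
case Hh: (is_hnf M).
  by exists M; split => //; apply: rt_refl.
have [M' [n' [Hb HM' Hlt]]] := head_step H (negbT Hh).
have [H' [HR Hh']] := IHk n' _ _ _ (ltac:(lia)) HM'.
exists H'; split => //; apply: rt_trans (rt_step _ _ _ _ Hb) HR.
Qed.


Lemma var0_typs m : typs (econs m e0) (Var 0) m (size m).
Proof.
elim: m => [|s m IH] /=; first by apply: tsNil; case.
rewrite -add1n; apply: tsCons (tVar (eeq_refl (esing 0 s)) (teq_refl s)) IH _.
by case.
Qed.

Lemma var0_typs_inv m D n : typs D (Var 0) m n -> exists l, permR l m /\ eeq D (econs l e0).
Proof.
elim: m D n => [|s m IH] D n.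
  by move=> /typs_nil_inv [_ E]; exists [::]; split => //; apply: eeq_trans E _; case.
move=> /typs_cons_inv [G1 [D2 [n1 [n2 [_ /typ_Var_inv [_ [s' [E1 Et]]] H2 H3]]]]].
have [l [[l0 [P0 F0]] E2]] := IH _ _ H2.
exists (s' :: l); split.
  by exists (s' :: l0); split; [exact: perm_skip | constructor].
apply: eeq_trans H3 _; apply: eeq_trans (eadd_mor E1 E2) _; by case.
Qed.

Definition eta_exp_term (M : term) : term := Lam (App (Defs.lift 0 M) (Var 0)).

Lemma eta_exp_typ G M t n : typ G M t n -> exists n', typ G (eta_exp_term M) t n'.
Proof.
have [m [r Et]] := arrow_surj t; subst t => H.
have H1 := lift_typ 0 H.
have H2 := tApp H1 (var0_typs m) (eeq_refl _).
exists (n + size m).+2; apply: tLam H2 _ _.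
- by move=> i; rewrite /etail /eadd /eins /= cats0.
- by rewrite /eadd /eins /=; apply: permR_refl.
Qed.

Lemma eta_red_typ G M t n : typ G (eta_exp_term M) t n -> exists n', typ G M t n'.
Proof.
move=> /typ_Lam_inv [Gb [m [r [n' [-> _ H1 H2 H3]]]]].
move: H1 => /typ_App_inv [G1 [D [ms [n1 [n2 [_ H4 H5 H6]]]]]].
have G10 := lift_typ_empty H4.
have H7 := strengthen_typ H4.
have [l [Hl ED]] := var0_typs_inv H5.
have Hm : permR m ms.
  apply: permR_trans H3 _; apply: permR_trans Hl; apply: perm_permR.
  apply: perm_trans (H6 0) _; rewrite /eadd G10 /=; exact: ED 0.
exists n1; apply: typ_teq (teq_arrow (permR_sym Hm) (teq_refl r)).
apply: typ_eeq H7 _; apply: eeq_trans H2 _; apply: eeq_trans (etail_mor H6) _.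
rewrite etail_add erem0; move=> i; rewrite /eadd; apply: perm_trans (Permutation_app_head _ (ED i.+1)) _.
have -> : econs l e0 i.+1 = [::] by []. by rewrite List.app_nil_r.
Qed.

Fixpoint ccomp (C D : context) : context :=
  match C with
  | Hole => D
  | CLam C' => CLam (ccomp C' D)
  | CAppL C' N => CAppL (ccomp C' D) N
  | CAppR N C' => CAppR N (ccomp C' D)
  end.

Lemma fill_ccomp C D M : fill (ccomp C D) M = fill C (fill D M).
Proof. by elim: C => //= [C ->|C -> N|N C ->]. Qed.

Definition obs_le (M N : term) : Prop := forall C, solvable (fill C M) -> solvable (fill C N).

Lemma obs_le_refl M : obs_le M M. Proof. by []. Qed.
Lemma obs_le_trans M N P : obs_le M N -> obs_le N P -> obs_le M P.
Proof. by move=> H1 H2 C /H1 /H2. Qed.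

Lemma obs_le_ctx D M N : obs_le M N -> obs_le (fill D M) (fill D N).
Proof. by move=> H C; rewrite -!fill_ccomp; apply: H. Qed.

Lemma obs_le_typ M N : (forall G t n, typ G M t n -> exists n', typ G N t n') -> obs_le M N.
Proof.
move=> H C /solvable_typable [G [t [n HC]]].
have [n' H'] := ctx_typ H HC; apply: typable_solvable; by exists G, t, n'.
Qed.

Lemma obs_beta1 M N : obs_le (App (Lam M) N) (subst M 0 N).
Proof. apply: obs_le_typ => G t n /beta_root_red [n' [_ H]]; by exists n'. Qed.

Lemma obs_beta2 M N : obs_le (subst M 0 N) (App (Lam M) N).
Proof. apply: obs_le_typ => G t n; exact: beta_root_exp. Qed.

Lemma obs_eta1 M : obs_le M (Lam (App (Defs.lift 0 M) (Var 0))).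
Proof. apply: obs_le_typ => G t n; exact: eta_exp_typ. Qed.

Lemma obs_eta2 M : obs_le (Lam (App (Defs.lift 0 M) (Var 0))) M.
Proof. apply: obs_le_typ => G t n; exact: eta_red_typ. Qed.

Lemma obs_unsolv M N : unsolvable M -> obs_le M N.
Proof.
move=> HM; apply: obs_le_typ => G t n H; exfalso; apply: HM.
apply: typable_solvable; by exists G, t, n.
Qed.

Definition Delta : term := Lam (App (Var 0) (Var 0)).
Definition Omega : term := App Delta Delta.

Lemma Omega_step X : beta Omega X -> X = Omega.
Proof.
move=> H; inversion H; subst => //.
- match goal with H' : beta Delta _ |- _ => inversion H'; subst end.
  match goal with H' : beta (App (Var 0) (Var 0)) _ |- _ => inversion H'; subst end;
  match goal with H' : beta (Var 0) _ |- _ => inversion H' end.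
- match goal with H' : beta Delta _ |- _ => inversion H'; subst end.
  match goal with H' : beta (App (Var 0) (Var 0)) _ |- _ => inversion H'; subst end;
  match goal with H' : beta (Var 0) _ |- _ => inversion H' end.
Qed.

Lemma Omega_unsolvable : unsolvable Omega.
Proof.
move=> [H [HR Hh]].
suff E : forall A B, beta_red A B -> A = Omega -> B = Omega by rewrite (E _ _ HR) in Hh.
move=> A B; elim=> {A B} //.
- by move=> A B Hb EA; subst A; exact: Omega_step.
- by move=> A B C _ IH1 _ IH2 /IH1 /IH2.
Qed.

Import Order.TTheory GRing.Theory Num.Theory.
Local Open Scope classical_set_scope.
Local Open Scope ereal_scope.

Section Esum.
Variable R : realType.

Definition w (n : nat) : \bar R := (((2:R) ^+ n)^-1)%:E.

Lemma w_gt0 n : 0 < w n.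
Proof. by rewrite lte_fin invr_gt0 exprn_gt0. Qed.
Lemma w_ge0 n : 0 <= w n.
Proof. exact: ltW (w_gt0 n). Qed.

Definition ind (A : set nat) (n : nat) : \bar R := if n \in A then w n else 0.

Lemma ind_ge0 A n : 0 <= ind A n.
Proof. by rewrite /ind; case: ifP => _ //; exact: w_ge0. Qed.

Lemma esum_ind A : esum A w = esum setT (ind A).
Proof. exact: esum_mkcond. Qed.

Lemma esum_sub A B : A `<=` B -> esum A w <= esum B w.
Proof.
move=> H; rewrite !esum_ind; apply: le_esum => i _; rewrite /ind.
have [HA|HA] := boolP (i \in A).
  by rewrite ifT //; apply: mem_set; apply: H; apply: set_mem.
by case: ifP => _ //; exact: w_ge0.
Qed.

Lemma esum_strict A B n : A `<=` B -> B n -> ~ A n -> esum A w + w n <= esum B w.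
Proof.
move=> H Bn An; rewrite -(esum_set1 (a := w) (w_ge0 n)) !esum_ind -esumD;
  try by move=> *; exact: ind_ge0.
apply: le_esum => i _; rewrite /ind.
have [HA|HA] := boolP (i \in A); have [HB|HB] := boolP (i \in B);
  have [H1|H1] := boolP (i \in [set n]); rewrite ?in_setE in HA HB H1.
all: rewrite ?adde0 ?add0e //.
all: try (by exfalso; apply: (negP HB); apply: H).
all: try (by exfalso; apply: (negP HB); apply: mem_set; apply: H).
all: try (by exfalso; move: H1 HA => ->).
all: try (by exfalso; move: H1 HB => ->).
all: try exact: w_ge0.
all: have E : i = n := H1; subst i; exfalso; apply: (negP HB); exact: mem_set.
Qed.

Lemma esum_tri A B C D : A `<=` C `|` D -> B `<=` C `&` D ->
  esum A w + esum B w <= esum C w + esum D w.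
Proof.
move=> H1 H2; rewrite !esum_ind -!esumD; try by move=> *; exact: ind_ge0.
apply: le_esum => i _; rewrite /ind.
have [HA|HA] := boolP (i \in A); have [HB|HB] := boolP (i \in B);
  have [HC|HC] := boolP (i \in C); have [HD|HD] := boolP (i \in D);
  move: HA HB HC HD; rewrite ?in_setE ?notin_setE => HA HB HC HD.
all: rewrite ?adde0 ?add0e //.
all: try exact: w_ge0.
all: try (by apply: adde_ge0; exact: w_ge0).
all: try (by rewrite leeDl //; exact: w_ge0).
all: try (by rewrite leeDr //; exact: w_ge0).
all: exfalso; have := H1 i; have := H2 i; rewrite /setU /setI /=; tauto.
Qed.

Lemma esum_union A B D : A `<=` B `|` D -> esum A w <= esum B w + esum D w.
Proof.
move=> H; have := esum_tri (B := set0) H (sub0set _).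
by rewrite esum_set0 adde0.
Qed.

Lemma esum_tail K : esum [set n | (K <= n)%N] w <= ((2:R) / 2 ^+ K)%:E.
Proof.
rewrite (@reindex_esum R nat nat setT _ (fun k => (k + K)%N)); last first.
  split.
  - by move=> k _ /=; rewrite leq_addl.
  - by move=> a b _ _ /addIn.
  - move=> n /= Hn; exists (n - K)%N => //; by rewrite subnK.
rewrite -nneseries_esumT; last by move=> n; exact: w_ge0.
have -> : \sum_(i <oo) w (i + K) = \sum_(i <oo) (((2:R) / 2 ^+ K) / (2 ^ i.+1)%:R)%:E.
  apply: eq_eseriesr => i _; rewrite /w; congr EFin.
  rewrite natrX exprS exprD; field.
  by rewrite !expf_neq0.
apply: epsilon_trick0; apply: divr_ge0 => //; exact: exprn_ge0.
Qed.

Lemma esum_le2 A : esum A w <= 2%:E.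
Proof.
have H := esum_tail 0; rewrite expr0 divr1 in H; apply: le_trans H.
apply: esum_sub => n _ /=; exact: leq0n.
Qed.

Lemma esum_fin A : esum A w \is a fin_num.
Proof.
rewrite ge0_fin_numE; first by apply: le_lt_trans (esum_le2 A) _; rewrite ltry.
apply: esum_ge0 => n _; exact: w_ge0.
Qed.

Lemma small_tail (eta : R) : (0 < eta)%R -> exists K, ((2:R) / 2 ^+ K < eta)%R.
Proof.
move=> Heta; set K := Num.Def.archi_bound (2 / eta).
have H1 := @archi_boundP R (2 / eta) (divr_ge0 (ler0n _ 2) (ltW Heta)).
have H2 : (K%:R < (2:R) ^+ K)%R by rewrite -natrX ltr_nat ltn_expl.
exists K; rewrite ltr_pdivrMr ?exprn_gt0 //.
by have := lt_trans H1 H2; rewrite ltr_pdivrMr // mulrC.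
Qed.

End Esum.

Section Main.
Variables (R : realType) (e : nat -> context) (g : context -> nat).
Hypothesis gK : cancel g e.

Let p := p_ctx R e.
Definition Sctx (M N : term) : set nat :=
  [set n | unsolvable (fill (e n) M) \/ unsolvable (fill (e n) N)].

Lemma pE M N : p M N = esum (Sctx M N) (@w R).
Proof. by []. Qed.

Lemma p_fin M N : p M N \is a fin_num.
Proof. rewrite pE; exact: esum_fin. Qed.

Lemma p_ge0 M N : 0 <= p M N.
Proof. rewrite pE; apply: esum_ge0 => n _; exact: w_ge0. Qed.



Lemma not_le_add (x y : \bar R) : x \is a fin_num -> 0 < y -> ~ (x + y <= x).
Proof.
move=> Hx Hy H; move: Hx Hy H; case: x => // x _; case: y => [y| |] //.
by rewrite lte_fin -EFinD lee_fin => Hy H; lra.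
Qed.

Lemma ple_obs M N : ppm_le p M N <-> obs_le M N.
Proof.
split.
- move=> H C HC; case: (pselect (solvable (fill C N))) => // HN; exfalso.
  have Hsub : Sctx M M `<=` Sctx M N by move=> n [] H1; left.
  have HB : Sctx M N (g C) by rewrite /Sctx /= gK; right.
  have HA : ~ Sctx M M (g C) by rewrite /Sctx /= gK => -[] /(_ HC).
  have := @esum_strict R _ _ _ Hsub HB HA; rewrite -!pE => H2.
  exact: not_le_add (p_fin M M) (w_gt0 _ (g C)) (le_trans H2 H).
- move=> H; rewrite /ppm_le !pE; apply: esum_sub => n [] H1; first by left.
  by left => HM; apply: H1; apply: H.
Qed.

Lemma peqv_obs M N : ppm_eqv p M N <-> obs_le M N /\ obs_le N M.
Proof. by rewrite /ppm_eqv; split => -[/ple_obs H1 /ple_obs H2]. Qed.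

Lemma p_PPM : is_PPM p.
Proof.
split.
- exact: p_ge0.
- move=> x y; rewrite !pE; apply: esum_sub => n [] H; by left.
- move=> x y; rewrite !pE; congr esum; apply/seteqP; split => n; rewrite /Sctx /=; tauto.
- move=> x y z; rewrite leeBrDr ?p_fin // !pE; apply: esum_tri.
  + move=> n; rewrite /Sctx /setU /=; tauto.
  + move=> n; rewrite /Sctx /setI /=; tauto.
Qed.

Lemma p_lambda : ext_lambda_theory (ppm_eqv p).
Proof.
split; first split.
- by move=> M; apply/peqv_obs; split; exact: obs_le_refl.
- by move=> M N /peqv_obs [H1 H2]; apply/peqv_obs; split.
- move=> M N P /peqv_obs [H1 H2] /peqv_obs [H3 H4]; apply/peqv_obs.
  split; [exact: obs_le_trans H1 H3 | exact: obs_le_trans H4 H2].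
- move=> M N P /peqv_obs [H1 H2].
  have D : forall D, ppm_eqv p (fill D M) (fill D N).
    by move=> D; apply/peqv_obs; split; apply: obs_le_ctx.
  split; [|split]; [exact: (D (CAppL Hole P)) | exact: (D (CAppR P Hole)) | exact: (D (CLam Hole))].
- move=> M N; apply/peqv_obs; split; [exact: obs_beta1 | exact: obs_beta2].
- move=> M; apply/peqv_obs; split; [exact: obs_eta1 | exact: obs_eta2].
Qed.

Lemma p_sensible : sensible_PPM p.
Proof.
split.
- move=> M HM N; apply/ple_obs; exact: obs_unsolv.
- move=> M HM /(_ Omega) /ple_obs /(_ Hole HM); exact: Omega_unsolvable.
Qed.

Definition q (M N : term) : R := fine (p M N).
Lemma pq M N : p M N = (q M N)%:E.
Proof. by rewrite /q fineK // p_fin. Qed.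

Lemma q_tri x y z : (q x y <= q x z + q z y - q z z)%R.
Proof. case: p_PPM => _ _ _ /(_ x y z); rewrite !pq => H. by rewrite -lee_fin EFinB EFinD. Qed.

Lemma cont_at C M (eta : R) : (0 < eta)%R -> exists delta : R, (0 < delta)%R /\
  forall N, (q N M < q M M + delta)%R ->
    (q (fill C N) (fill C M) < q (fill C M) (fill C M) + eta)%R.
Proof.
move=> Heta; have [K HK] := small_tail Heta.
set Mx := (\max_(i < K) g (ccomp (e i) C))%N.
exists (((2:R) ^+ Mx)^-1)%R; split; first by rewrite invr_gt0 exprn_gt0.
move=> N HN.
have claim : forall i, (i < K)%N -> unsolvable (fill (e i) (fill C N)) ->
    unsolvable (fill (e i) (fill C M)).
  move=> i Hi HU HS.
  set m := g (ccomp (e i) C).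
  have Em : e m = ccomp (e i) C by rewrite /m gK.
  have Hsub : Sctx M M `<=` Sctx N M by move=> n; rewrite /Sctx /=; tauto.
  have HB : Sctx N M m by rewrite /Sctx /= Em fill_ccomp; left.
  have HA : ~ Sctx M M m by rewrite /Sctx /= Em fill_ccomp /unsolvable; tauto.
  have := @esum_strict R _ _ _ Hsub HB HA; rewrite -!pE !pq /w -EFinD lee_fin => H.
  have Hm : (m <= Mx)%N.
    exact: (@leq_bigmax _ (fun j : 'I_K => g (ccomp (e j) C)) (Ordinal Hi)).
  have Hw : (((2:R) ^+ Mx)^-1 <= ((2:R) ^+ m)^-1)%R.
    by rewrite lef_pV2 ?posrE ?exprn_gt0 // ler_eXn2l // ltr1n.
  lra.
have Hsub : Sctx (fill C N) (fill C M) `<=` Sctx (fill C M) (fill C M) `|` [set n | (K <= n)%N].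
  move=> n; rewrite /Sctx /setU /=; case: (ltnP n K) => Hn.
    by move=> [H1|H1]; left; left => //; exact: claim Hn H1.
  by move=> _; right.
have := @esum_union R _ _ _ Hsub; rewrite -!pE !pq.
have HT := @esum_tail R K.
rewrite -(fineK (@esum_fin R [set n | (K <= n)%N])) in HT *.
rewrite -EFinD !lee_fin in HT *; lra.
Qed.

Lemma p_cont C : ppm_continuous p (fill C).
Proof.
move=> U [F [HF ->]].
exists [set c : term * R | (0 < c.2)%R /\
  ppm_ball p c.1 c.2 `<=` fill C @^-1` (\bigcup_(c in F) ppm_ball p c.1 c.2)].
split; first by move=> c [].
apply/seteqP; split.
- move=> M /= [c Fc Hc].
  have Hpos := HF c Fc.
  move: Hc; rewrite /ppm_ball /= !pq -EFinD lte_fin => Hc.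
  have [d [Hd Hcont]] := @cont_at C M (q c.1 c.1 + c.2 - q (fill C M) c.1)%R ltac:(lra).
  exists (M, d) => /=.
    split => // N; rewrite /ppm_ball /= !pq -EFinD lte_fin => HN.
    exists c => //; rewrite /ppm_ball /= !pq -EFinD lte_fin.
    have := Hcont N HN; have := q_tri (fill C N) c.1 (fill C M); lra.
  rewrite /ppm_ball /= pq -EFinD lte_fin; lra.
- by move=> M [c [Hc Hsub] HM]; exact: Hsub.
Qed.

End Main.

Theorem mainTheorem2 (R : realType) (e : nat -> context) :
  bijective e ->
  ext_lambda_PPM (p_ctx R e) /\ sensible_PPM (p_ctx R e).
Proof.
case=> g eK gK; split.
- split; [exact: p_PPM | exact: p_lambda | exact: p_cont gK].
- exact: p_sensible gK.
Qed.
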